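(* Let $\mathcal{P}$ be a grid polyomino with holes $\mathcal{H}_{ij}=[a_{ij},b_{ij}]$, $i\in[r]$, $j\in[s]$, and toric ideal $J_{\mathcal{P}}$. Let $f=f^+-f^-\in J_{\mathcal{P}}$ be a binomial, $V_+=\{v\in V(\mathcal{P}): x_v\mid f^+\}$, $V_-=\{v\in V(\mathcal{P}): x_v\mid f^-\}$. If $v\in V_+\cap\mathcal{L}_{i,j}$ for some $i\in[r]$, $j\in[s]$, then there exists $v'\in V_-\cap\mathcal{L}_{i,j}$.
   Context: A cell is $[a,a+(1,1)]$, $a\in\mathbb{N}^2$, with vertices $a,a+(1,0),a+(0,1),a+(1,1)$; a polyomino is a finite nonempty set of cells, any two joined by a sequence of cells in it with consecutive ones sharing an edge; $V(\mathcal{P})$ is the set of vertices of its cells; $S=\mathbb{K}[x_v\mid v\in V(\mathcal{P})]$, $\mathbb{K}$ a field. For $a=(a_1,a_2)\le b=(b_1,b_2)$ componentwise, $[a,b]=\{(p,q): a_1\le p\le b_1, a_2\le q\le b_2\}$. Grid polyomino: let $m,n\ge1$, $r,s\ge1$, and for $i\in[r]$, $j\in[s]$ let $a_{ij},b_{ij}\in\mathbb{N}^2$ with $1<(a_{ij})_1<(b_{ij})_1<m$, $1<(a_{ij})_2<(b_{ij})_2<n$, such that (1) for each $i$, $(a_{i\ell})_1=(a_{ik})_1$ and $(b_{i\ell})_1=(b_{ik})_1$ for all $\ell,k\in[s]$; (2) for each $j$, $(a_{\ell j})_2=(a_{kj})_2$ and $(b_{\ell j})_2=(b_{kj})_2$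 for all $\ell,k\in[r]$; (3) $(a_{i+1,j})_1=(b_{ij})_1+1$ for $i\in[r-1]$ and $(a_{i,j+1})_2=(b_{ij})_2+1$ for $j\in[s-1]$. The grid polyomino $\mathcal{P}$ is the set of cells of $[(1,1),(m,n)]$ not contained in any $\mathcal{H}_{ij}=[a_{ij},b_{ij}]$; the holes of $\mathcal{P}$ are the sets of cells of the $\mathcal{H}_{ij}$, with lower left corner $a_{ij}$. Toric ideal: set $\mathcal{F}_{i,j}=\{(x,y)\in V(\mathcal{P}): x\le (a_{ij})_1,\ y\le (a_{ij})_2\}$. A horizontal edge interval is a set $\{(t,y):p\le t\le q\}$ with each $\{(t,y),(t+1,y)\}$, $p\le t<q$, an edge of a cell of $\mathcal{P}$; maximal if not strictly contained in another; vertical analogously. Each $a\in V(\mathcal{P})$ lies in a unique maximal horizontal edge interval $H(a)$ and maximal vertical one $V(a)$. With variables $h_H,v_V$ for maximal edge intervals and $w_{i,j}$, define $\varphi(x_a)=h_{H(a)}v_{V(a)}\prod_{(i,j):a\in\mathcal{F}_{i,j}}w_{i,j}$; $J_{\mathcal{P}}=\ker\varphi$. Finally $\mathcal{L}_{i,j}=\mathcal{F}_{i,j}\setminus\bigcup\{\mathcal{F}_{k,h}: k\le i,\ h\le j,\ (k,h)\ne(i,j)\}$. *)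

(* Defs.v *)
From HB Require Import structures.
From mathcomp Require Import all_boot all_order all_algebra.
From mathcomp Require Import mpoly.
Set Implicit Arguments. Unset Strict Implicit. Unset Printing Implicit Defensive.
Import GRing.Theory.
Local Open Scope ring_scope.

(* Points of N^2 are pairs of nats; a cell is identified by its lower-left
   corner c, i.e. the cell [c, c+(1,1)]. *)

Section Grid.
Variables (m n r s : nat) (a b : 'I_r -> 'I_s -> nat * nat).

(* Grid polyomino hypotheses (coordinates with 1-based [r],[s] replaced by
   0-based ordinals 'I_r, 'I_s). *)
Definition grid_hyp : Prop :=
  [/\ (1 <= m)%N, (1 <= n)%N, (1 <= r)%N & (1 <= s)%N] /\
  (forall i j, 1 < (a i j).1 < (b i j).1 /\ (b i j).1 < m)%N /\
  (forall i j, 1 < (a i j).2 < (b i j).2 /\ (b i j).2 < n)%N /\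
  (forall i l k, (a i l).1 = (a i k).1 /\ (b i l).1 = (b i k).1) /\
  (forall j l k, (a l j).2 = (a k j).2 /\ (b l j).2 = (b k j).2) /\
  (forall (i i' : 'I_r) j, val i' = (val i).+1 -> (a i' j).1 = ((b i j).1).+1) /\
  (forall i (j j' : 'I_s), val j' = (val j).+1 -> (a i j').2 = ((b i j).2).+1).

Definition cell_in (c p q : nat * nat) : bool :=
  [&& (p.1 <= c.1)%N, (c.1.+1 <= q.1)%N, (p.2 <= c.2)%N & (c.2.+1 <= q.2)%N].

Definition inP (c : nat * nat) : bool :=
  cell_in c (1, 1)%N (m, n) && ~~ [exists i, exists j, cell_in c (a i j) (b i j)].

Definition inV (v : nat * nat) : bool :=
  [|| inP v,
      (0 < v.1)%N && inP (v.1.-1, v.2),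
      (0 < v.2)%N && inP (v.1, v.2.-1) |
      [&& (0 < v.1)%N, (0 < v.2)%N & inP (v.1.-1, v.2.-1)]].

(* {(t,y),(t+1,y)} is an edge of a cell of P *)
Definition hedge (t y : nat) : bool :=
  inP (t, y) || ((0 < y)%N && inP (t, y.-1)).
(* {(x,t),(x,t+1)} is an edge of a cell of P *)
Definition vedge (x t : nat) : bool :=
  inP (x, t) || ((0 < x)%N && inP (x.-1, t)).

(* All vertices of P lie in [0,m] x [0,n]. *)
Definition VT := ('I_m.+1 * 'I_n.+1)%type.
Definition pt (v : VT) : nat * nat := (val v.1, val v.2).

(* H(v): the maximal horizontal edge interval containing v, i.e. the set of
   points (t, v_2) such that every {(t',v_2),(t'+1,v_2)} between t and v_1 is an
   edge of a cell of P. *)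
Definition Hint (v : VT) : {set VT} :=
  [set u : VT | (val u.2 == val v.2) &&
     [forall t : 'I_m.+1, ((minn (val u.1) (val v.1) <= t)%N &&
                           (t < maxn (val u.1) (val v.1))%N) ==> hedge t (val v.2)]].
(* V(v): the maximal vertical edge interval containing v. *)
Definition Vint (v : VT) : {set VT} :=
  [set u : VT | (val u.1 == val v.1) &&
     [forall t : 'I_n.+1, ((minn (val u.2) (val v.2) <= t)%N &&
                           (t < maxn (val u.2) (val v.2))%N) ==> vedge (val v.1) t]].

Definition inF (i : 'I_r) (j : 'I_s) (v : nat * nat) : bool :=
  [&& inV v, (v.1 <= (a i j).1)%N & (v.2 <= (a i j).2)%N].

Definition inL (i : 'I_r) (j : 'I_s) (v : nat * nat) : bool :=
  inF i j v &&
  ~~ [exists k : 'I_r, exists h : 'I_s,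
        [&& (k <= i)%N, (h <= j)%N, ((k, h) != (i, j)) & inF k h v]].

(* Target variables: h_H and v_V indexed by sets of points (only the maximal
   edge intervals are actually used), and w_{i,j}. *)
Definition TT := (({set VT} + {set VT}) + ('I_r * 'I_s))%type.

Definition hvar (K : fieldType) (H : {set VT}) : {mpoly K[#|{: TT}|]} :=
  'X_(enum_rank (inl (inl H) : TT)).
Definition vvar (K : fieldType) (V : {set VT}) : {mpoly K[#|{: TT}|]} :=
  'X_(enum_rank (inl (inr V) : TT)).
Definition wvar (K : fieldType) (i : 'I_r) (j : 'I_s) : {mpoly K[#|{: TT}|]} :=
  'X_(enum_rank (inr (i, j) : TT)).

(* The ring S: polynomials in variables x_v, v in [0,m] x [0,n]; the
   polynomials of K[x_v | v in V(P)] are those involving only v with inV. *)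
Definition Sring (K : fieldType) := {mpoly K[#|{: VT}|]}.

Definition xvar (K : fieldType) (v : VT) : Sring K := 'X_(enum_rank v).

Definition phi_var (K : fieldType) (k : 'I_#|{: VT}|) : {mpoly K[#|{: TT}|]} :=
  let v := enum_val k in
  hvar K (Hint v) * vvar K (Vint v) *
  \prod_(ij : 'I_r * 'I_s | inF ij.1 ij.2 (pt v)) wvar K ij.1 ij.2.

Definition phi (K : fieldType) (f : Sring K) : {mpoly K[#|{: TT}|]} :=
  mmap (@mpolyC _ K) (@phi_var K) f.

(* J_P = ker phi (restricted to polynomials in the variables x_v, v \in V(P)) *)
Definition in_JP (K : fieldType) (f : Sring K) : Prop :=
  (forall mu, mu \in msupp f -> forall v : VT, (0 < mu (enum_rank v))%N -> inV (pt v))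
  /\ phi f = 0.

End Grid.

(* Main.v *)
Require Import Defs.
From HB Require Import structures.
From mathcomp Require Import all_boot all_order all_algebra.
From mathcomp Require Import mpoly.
From mathcomp Require Import zify.
Set Implicit Arguments. Unset Strict Implicit. Unset Printing Implicit Defensive.
Import GRing.Theory.
Local Open Scope ring_scope.

Section Alg.
Variables (K : fieldType) (m n r s : nat) (a b : 'I_r -> 'I_s -> nat * nat).
Local Notation N := #|{: VT m n}|.
Local Notation NT := #|{: TT m n r s}|.

Definition ee (k : 'I_N) : 'X_{1..NT} :=
  (U_(enum_rank (inl (inl (@Hint m n r s a b (enum_val k))) : TT m n r s)) +
   U_(enum_rank (inl (inr (@Vint m n r s a b (enum_val k))) : TT m n r s)) +
   \sum_(ij : 'I_r * 'I_s | inF m n a b ij.1 ij.2 (pt (enum_val k)))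
      U_(enum_rank (inr ij : TT m n r s)))%MM.

Lemma phi_varE k : @phi_var m n r s a b K k = 'X_[ee k].
Proof.
rewrite /phi_var /ee /hvar /vvar /wvar !mpolyXD.
rewrite (big_morph (fun mm => 'X_[mm]) (@mpolyXD _ _) (mpolyX0 _ _)).
by congr (_ * _); apply: eq_bigr => -[].
Qed.


Lemma phiX (mu : 'X_{1..N}) :
  @phi m n r s a b K ('X_[mu] : Sring m n K) = 'X_[(\sum_(k < N) ee k *+ mu k)%MM].
Proof.
rewrite /phi mmapX /mmap1.
under eq_bigr do rewrite phi_varE.
by rewrite mprodXnE.
Qed.

Definition Ssum (mu : 'X_{1..N}) (Q : nat * nat -> bool) : nat :=
  (\sum_(k < N) mu k * Q (pt (enum_val k)))%N.

Lemma eeW k i j : ee k (enum_rank (inr (i, j) : TT m n r s)) = inF m n a b i j (pt (enum_val k)).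
Proof.
rewrite /ee !mnmDE !mnm1E !(inj_eq enum_rank_inj) /= add0n mnm_sumE.
under eq_bigr do rewrite mnm1E (inj_eq enum_rank_inj) /=.
rewrite big_mkcond /=.
rewrite (bigD1 (i, j)) //= eqxx big1 ?addn0.
  by case: (inF _ _ _ _ _).
move=> ij H; case: ifP => // _; case: eqP => // -[E].
by rewrite E eqxx in H.
Qed.

Lemma Ssum_eq (fp fm : 'X_{1..N}) :
  @phi m n r s a b K ('X_[fp] - 'X_[fm] : Sring m n K) = 0 ->
  forall i j, Ssum fp (inF m n a b i j) = Ssum fm (inF m n a b i j).
Proof.
rewrite /phi mmapB -!/(@phi m n r s a b K _) !phiX => /eqP; rewrite subr_eq0 => /eqP H.
have: (\sum_(k < N) ee k *+ fp k)%MM = (\sum_(k < N) ee k *+ fm k)%MM.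
  move/(congr1 (fun p => p@_(\sum_(k < N) ee k *+ fp k)%MM)): H.
  rewrite !mcoeffX eqxx; case: eqP => // _ /eqP; by rewrite oner_eq0.
move=> E i j; move/(congr1 (fun mm : 'X_{1..NT} => mm (enum_rank (inr (i, j) : TT m n r s)))): E.
rewrite !mnm_sumE /Ssum.
under eq_bigr do rewrite mulmnE eeW.
under [X in _ = X -> _]eq_bigr do rewrite mulmnE eeW.
move=> E; under eq_bigr do rewrite mulnC.
under [RHS]eq_bigr do rewrite mulnC.
exact: E.
Qed.
End Alg.

Local Open Scope nat_scope.
Section Comb.
Variables (m n r s : nat) (a b : 'I_r -> 'I_s -> nat * nat).
Hypothesis Hgrid : grid_hyp m n a b.

Lemma mono1 (k i : 'I_r) h : k <= i -> (a k h).1 <= (a i h).1.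
Proof.
case: Hgrid => _ [Ha [_ [_ [_ [H3 _]]]]].
move=> le; suff: forall d (k i : 'I_r), val i = val k + d -> (a k h).1 <= (a i h).1.
  by move/(_ (i - k)%N k i); apply; rewrite subnKC.
elim=> [|d IH] k' i' E.
  by have -> : i' = k' by apply: val_inj; rewrite E addn0.
have lt : (k' + d < r)%N by move: (ltn_ord i') E => /=; lia.
have := IH k' (Ordinal lt) erefl.
have := H3 (Ordinal lt) i' h; rewrite /= E addnS => /(_ erefl) ->.
have := Ha (Ordinal lt) h; move=> [/andP[_ ?] _]; lia.
Qed.

Lemma mono2 (k j : 'I_s) h : k <= j -> (a h k).2 <= (a h j).2.
Proof.
case: Hgrid => _ [_ [Hb [_ [_ [_ H4]]]]].
move=> le; suff: forall d (k i : 'I_s), val i = val k + d -> (a h k).2 <= (a h i).2.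
  by move/(_ (j - k)%N k j); apply; rewrite subnKC.
elim=> [|d IH] k' i' E.
  by have -> : i' = k' by apply: val_inj; rewrite E addn0.
have lt : (k' + d < s)%N by move: (ltn_ord i') E => /=; lia.
have := IH k' (Ordinal lt) erefl.
have := H4 h (Ordinal lt) i'; rewrite /= E addnS => /(_ erefl) ->.
have := Hb h (Ordinal lt); move=> [/andP[_ ?] _]; lia.
Qed.

Lemma inFE k h v : inF m n a b k h v = [&& inV m n a b v, v.1 <= (a k h).1 & v.2 <= (a k h).2].
Proof. by []. Qed.

Lemma inF_mono (k k' : 'I_r) (h h' : 'I_s) v : k <= k' -> h <= h' ->
  inF m n a b k h v -> inF m n a b k' h' v.
Proof.
case: Hgrid => _ [_ [_ [H1 [H2 _]]]].
move=> lk lh; rewrite !inFE => /and3P[-> x y] /=.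
have := mono1 h' lk; have := mono2 k' lh.
case: (H1 k h h') => e1 _; case: (H2 h k k') => e2 _. lia.
Qed.

Lemma inF_join (k i : 'I_r) (h j : 'I_s) v :
  inF m n a b k j v -> inF m n a b i h v -> inF m n a b k h v.
Proof.
case: Hgrid => _ [_ [_ [H1 [H2 _]]]].
rewrite !inFE => /and3P[-> x _] /and3P[_ _ y] /=.
case: (H1 k h j) => e1 _; case: (H2 h k i) => e2 _. lia.
Qed.


Variables (i : 'I_r) (j : 'I_s).
Definition PX v := [exists k : 'I_r, (k < i) && inF m n a b k j v].
Definition PY v := [exists h : 'I_s, (h < j) && inF m n a b i h v].
Definition PZ v := [exists k : 'I_r, exists h : 'I_s, [&& k < i, h < j & inF m n a b k h v]].

Lemma pointwise v :
  (inL m n a b i j v + PX v + PY v = inF m n a b i j v + PZ v)%N.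
Proof.
have XF : PX v -> inF m n a b i j v.
  by case/existsP=> k /andP[lt]; apply: inF_mono => //; apply: ltnW.
have YF : PY v -> inF m n a b i j v.
  by case/existsP=> h /andP[lt]; apply: inF_mono => //; apply: ltnW.
have ZE : PZ v = PX v && PY v.
  apply/idP/andP.
    case/existsP=> k /existsP[h] /and3P[lk lh F]; split.
      by apply/existsP; exists k; rewrite lk; apply: inF_mono F => //; apply: ltnW.
    by apply/existsP; exists h; rewrite lh; apply: inF_mono F => //; apply: ltnW.
  case=> /existsP[k /andP[lk Fk]] /existsP[h /andP[lh Fh]].
  by apply/existsP; exists k; apply/existsP; exists h; rewrite lk lh; apply: inF_join Fk Fh.
have LE : inL m n a b i j v = inF m n a b i j v && ~~ (PX v || PY v).
  rewrite /inL; case F: (inF _ _ _ _ _ _ _) => //=; congr negb.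
  apply/existsP/orP.
    case=> k /existsP[h] /and4P[lk lh ne Fkh].
    case: (ltnP k i) => [lt|ge].
      by left; apply/existsP; exists k; rewrite lt; apply: inF_mono Fkh.
    have ek : k = i by apply: val_inj; apply/eqP; rewrite eqn_leq lk ge.
    subst k; right; apply/existsP; exists h; rewrite Fkh andbT ltn_neqAle lh andbT.
    by apply: contra ne => /eqP/val_inj ->.
  case=> [/existsP[k /andP[lk Fk]] | /existsP[h /andP[lh Fh]]].
    exists k; apply/existsP; exists j; rewrite (ltnW lk) leqnn Fk andbT /=.
    by apply/negP => /eqP [] ek; move: lk; rewrite ek ltnn.
  exists i; apply/existsP; exists h; rewrite leqnn (ltnW lh) Fh andbT /=.
  by apply/negP => /eqP [] eh; move: lh; rewrite eh ltnn.
rewrite ZE LE; move: XF YF.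
case: (inF _ _ _ _ _ _ _); case: (PX v); case: (PY v) => //= H1 H2.
all: by [move: (H1 isT) | move: (H2 isT)].
Qed.

End Comb.

Local Open Scope ring_scope.
Lemma Qeq (m n : nat) (fp fm : 'X_{1..#|{: VT m n}|}) (Q : nat * nat -> bool) :
  (forall r s (a b : 'I_r -> 'I_s -> nat * nat),
     (forall k h, Ssum fp (inF m n a b k h) = Ssum fm (inF m n a b k h)) ->
     ((forall v, Q v = false) \/ (exists k h, forall v, Q v = inF m n a b k h v)) ->
     Ssum fp Q = Ssum fm Q).
Proof.
move=> r s a b E [H0|[k [h Hk]]].
  by rewrite /Ssum !big1 // => x _; rewrite H0 muln0.
rewrite /Ssum (eq_bigr (fun x => fp x * inF m n a b k h (pt (enum_val x))))%N; last by move=> x _; rewrite Hk.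
rewrite [RHS](eq_bigr (fun x => fm x * inF m n a b k h (pt (enum_val x))))%N; last by move=> x _; rewrite Hk.
exact: E.
Qed.

Theorem lemma4p3 (K : fieldType) (m n r s : nat) (a b : 'I_r -> 'I_s -> nat * nat)
  (Hgrid : grid_hyp m n a b)
  (fp fm : 'X_{1..#|{: VT m n}|})
  (Hsupp : forall v : VT m n,
      ((0 < fp (enum_rank v))%N || (0 < fm (enum_rank v))%N) -> inV m n a b (pt v))
  (Hf : @in_JP m n r s a b K ('X_[fp] - 'X_[fm] : Sring m n K))
  (v : VT m n) (i : 'I_r) (j : 'I_s) :
  (0 < fp (enum_rank v))%N -> inL m n a b i j (pt v) ->
  exists v' : VT m n, (0 < fm (enum_rank v'))%N /\ inL m n a b i j (pt v').
Proof.
move=> pos Lv.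
have E := Ssum_eq Hf.2.
have Q := Qeq (Q := _) E.
have sumE (mu : 'X_{1..#|{: VT m n}|}) : (Ssum mu (inL m n a b i j) + Ssum mu (@PX m n r s a b i j) + Ssum mu (@PY m n r s a b i j)
               = Ssum mu (inF m n a b i j) + Ssum mu (@PZ m n r s a b i j))%N.
  rewrite /Ssum -!big_split; apply: eq_bigr => k _ /=.
  by rewrite -!mulnDr (pointwise Hgrid).
have eX : Ssum fp (@PX m n r s a b i j) = Ssum fm (@PX m n r s a b i j).
  apply: Q; case: (posnP i) => [i0|ip].
    by left => w; apply/existsP => -[k]; rewrite i0.
  have lt : (i.-1 < r)%N by apply: leq_ltn_trans (leq_pred _) (ltn_ord i).
  right; exists (Ordinal lt), j => w; apply/existsP/idP.
    case=> k /andP[lk Fk]; apply: inF_mono Fk => //=; rewrite -ltnS prednK //.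
  by move=> F; exists (Ordinal lt); rewrite F andbT /= prednK ?leqnn.
have eY : Ssum fp (@PY m n r s a b i j) = Ssum fm (@PY m n r s a b i j).
  apply: Q; case: (posnP j) => [j0|jp].
    by left => w; apply/existsP => -[k]; rewrite j0.
  have lt : (j.-1 < s)%N by apply: leq_ltn_trans (leq_pred _) (ltn_ord j).
  right; exists i, (Ordinal lt) => w; apply/existsP/idP.
    case=> k /andP[lk Fk]; apply: inF_mono Fk => //=; rewrite -ltnS prednK //.
  by move=> F; exists (Ordinal lt); rewrite F andbT /= prednK ?leqnn.
have eZ : Ssum fp (@PZ m n r s a b i j) = Ssum fm (@PZ m n r s a b i j).
  apply: Q; case: (posnP i) => [i0|ip].
    by left => w; apply/existsP => -[k] /existsP[h]; rewrite i0.
  case: (posnP j) => [j0|jp].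
    by left => w; apply/existsP => -[k] /existsP[h]; rewrite j0 andbF.
  have lt : (i.-1 < r)%N by apply: leq_ltn_trans (leq_pred _) (ltn_ord i).
  have lt' : (j.-1 < s)%N by apply: leq_ltn_trans (leq_pred _) (ltn_ord j).
  right; exists (Ordinal lt), (Ordinal lt') => w; apply/existsP/idP.
    case=> k /existsP[h] /and3P[lk lh Fk]; apply: inF_mono Fk => //=; rewrite -ltnS prednK //.
  move=> F; exists (Ordinal lt); apply/existsP; exists (Ordinal lt').
  by rewrite F andbT /= !prednK ?leqnn.
have eL : Ssum fp (inL m n a b i j) = Ssum fm (inL m n a b i j).
  have h1 := sumE fp; have h2 := sumE fm; rewrite eX eY E eZ -h2 in h1; lia.
have : (0 < Ssum fm (inL m n a b i j))%N.
  rewrite -eL /Ssum (bigD1 (enum_rank v)) //= enum_rankK Lv muln1.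
  exact: leq_trans pos (leq_addr _ _).
case: (boolP [exists k, 0 < fm k * inL m n a b i j (pt (enum_val k))]%N).
  case/existsP=> k; case L: (inL _ _ _ _ _ _ _); rewrite ?muln0 ?muln1 // => fk _.
  by exists (enum_val k); rewrite enum_valK fk L.
move=> /existsPn H; rewrite /Ssum big1 // => k _.
by apply/eqP; rewrite -leqn0 leqNgt H.
Qed.
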